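(* Let $\alpha:[r]\to[m]$, $\alpha':[r']\to[m]$ be increasing and $\beta:[r]\to[n]$, $\beta':[r']\to[n]$ injective. If there exist $L\in L_m(P_m)$ and $R\in L_n(P_n)$ with $L\,\Pi(\alpha,\beta)=\Pi(\alpha',\beta')\,R$, then $\Pi(\alpha,\beta)=\Pi(\alpha',\beta')$.
   Context: $\mathbb{F}$ is the field with two elements, $[n]=\{1,\dots,n\}$, $e_{n,i}$ standard basis column vectors, $I_n$ identity. $P_n=\{(i,j):i,j\in[n],i>j\}$ and $L_n(P_n)=I_n+\mathrm{span}\{e_{n,i}e_{n,j}^{\top}:i>j\}$ is the group of lower unitriangular matrices. $\Pi(\alpha,\beta)=\sum_{i=1}^re_{m,\alpha(i)}e_{n,\beta(i)}^{\top}\in\mathbb{F}^{m\times n}$ (an incomplete permutation matrix). *)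

(* Defs.v *)
From HB Require Import structures.
From mathcomp Require Import all_boot all_order all_algebra.
Set Implicit Arguments. Unset Strict Implicit. Unset Printing Implicit Defensive.
Import GRing.Theory.
Local Open Scope ring_scope.

Notation F2 := 'F_2.

Definition Pi (m n r : nat) (alpha : 'I_r -> 'I_m) (beta : 'I_r -> 'I_n)
  : 'M[F2]_(m, n) := \sum_(i < r) delta_mx (alpha i) (beta i).

(* Membership in L_n(P_n) = I_n + span{ e_i e_j^T : i > j } *)
Definition lower_unitri (n : nat) (L : 'M[F2]_n) : Prop :=
  exists c : 'I_n -> 'I_n -> F2,
    L = 1%:M + \sum_(i < n) \sum_(j < n | (j < i)%N) c i j *: delta_mx i j.

Definition increasing (r m : nat) (f : 'I_r -> 'I_m) : Prop :=
  forall i j : 'I_r, (i < j)%N -> (f i < f j)%N.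

(* Main.v *)
Require Import Defs.
From mathcomp Require Import all_boot all_order all_algebra.
Set Implicit Arguments. Unset Strict Implicit. Unset Printing Implicit Defensive.
Import GRing.Theory.
Local Open Scope ring_scope.

Lemma F2_cases (x : F2) : x = 0 \/ x = 1.
Proof. case: x => [[|[|k]] Hk]; [left|right|]; try by apply/val_inj. by []. Qed.

Lemma F2_nz (x : F2) : x != 0 -> x = 1.
Proof. by case: (F2_cases x) => ->; rewrite ?eqxx. Qed.

Lemma F2_z (x : F2) : ~~ (x != 0) -> x = 0.
Proof. by rewrite negbK => /eqP. Qed.

Definition lowU n (M : 'M[F2]_n) :=
  (forall i j : 'I_n, (i < j)%N -> M i j = 0) /\ (forall i, M i i = 1).

Definition pp m n (P : 'M[F2]_(m, n)) :=
  (forall a b b', P a b != 0 -> P a b' != 0 -> b = b') /\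
  (forall a a' b, P a b != 0 -> P a' b != 0 -> a = a').

Lemma lower_unitri_lowU n (M : 'M[F2]_n) : lower_unitri M -> lowU M.
Proof.
case=> c ->; split => [i j lt|i]; rewrite !mxE summxE big1 ?addr0.
- by rewrite -val_eqE ltn_eqF.
- move=> i' _; rewrite summxE big1 // => j' ji'; rewrite !mxE.
  case: (eqVneq i i') => [?|]; last by rewrite mulr0.
  case: (eqVneq j j') => [?|]; last by rewrite mulr0.
  subst; by move: (ltn_trans lt ji'); rewrite ltnn.
- by rewrite eqxx.
- move=> i' _; rewrite summxE big1 // => j' ji'; rewrite !mxE.
  case: (eqVneq i i') => [?|]; last by rewrite mulr0.
  case: (eqVneq i j') => [?|]; last by rewrite andbF mulr0.
  subst; by rewrite ltnn in ji'.
Qed.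

Lemma PiE m n r (alpha : 'I_r -> 'I_m) (beta : 'I_r -> 'I_n) a b :
  injective alpha ->
  Pi alpha beta a b = [exists k, (alpha k == a) && (beta k == b)]%:R.
Proof.
move=> ia; rewrite /Pi summxE.
case: existsP => [[k /andP[/eqP ha /eqP hb]]|hn].
- rewrite (bigD1 k) //= big1 ?addr0; first by rewrite mxE ha hb !eqxx.
  move=> k' nk; rewrite mxE; case: (eqVneq a (alpha k')) => //= hk'.
  by move: nk; rewrite (ia k' k) ?eqxx // -hk' ha.
- apply: big1 => k _; rewrite mxE.
  case: (eqVneq a (alpha k)) => //= ea; case: (eqVneq b (beta k)) => //= eb.
  by exfalso; apply: hn; exists k; rewrite ea eb !eqxx.
Qed.

Lemma Pi_pp m n r (alpha : 'I_r -> 'I_m) (beta : 'I_r -> 'I_n) :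
  injective alpha -> injective beta -> pp (Pi alpha beta).
Proof.
move=> ia ib; split.
- move=> a b b'; rewrite !PiE //.
  case: existsP => [[k /andP[/eqP ha /eqP hb]]|]; last by rewrite eqxx.
  case: existsP => [[k' /andP[/eqP ha' /eqP hb']]|]; last by rewrite eqxx.
  by move=> _ _; rewrite -hb -hb' (ia k k') // ha ha'.
- move=> a a' b; rewrite !PiE //.
  case: existsP => [[k /andP[/eqP ha /eqP hb]]|]; last by rewrite eqxx.
  case: existsP => [[k' /andP[/eqP ha' /eqP hb']]|]; last by rewrite eqxx.
  by move=> _ _; rewrite -ha -ha' (ib k k') // hb hb'.
Qed.

Lemma key m n (P P' : 'M[F2]_(m,n)) : pp P -> pp P' ->
  forall k i (L : 'M_m) (R : 'M_n), (i + k = m)%N -> lowU L -> lowU R ->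
  (forall a c : 'I_m, (c < i)%N -> L a c = (a == c)%:R) -> L *m P = P' *m R ->
  forall a : 'I_m, (i <= a)%N -> forall b, P a b = P' a b.
Proof.
move=> [P1 P2] [Q1 Q2]; elim=> [|k IH] i L R him [L1 L2] [R1 R2] Li E a ia.
  have : (a < i + 0)%N by rewrite him.
  by rewrite addn0 ltnNge ia.
have ilt : (i < m)%N by rewrite -him addnS ltnS leq_addr.
pose a0 : 'I_m := Ordinal ilt.
have La0 : forall c, L a0 c = (a0 == c)%:R.
  move=> c; case: (ltngtP c i) => h; first exact: Li.
    have -> : (a0 == c) = false by apply/eqP => h'; rewrite -h' /= ltnn in h.
    exact: L1.
  have -> : c = a0 by apply/val_inj. by rewrite eqxx L2.
have rowE : forall b, (L *m P) a0 b = P a0 b.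
  move=> b; rewrite mxE (bigD1 a0) //= La0 eqxx mul1r big1 ?addr0 // => c nc.
  by rewrite La0 eq_sym (negbTE nc) mul0r.
pose L' : 'M[F2]_m := \matrix_(x, c) if c == a0 then (x == c)%:R else L x c.
have L'l : lowU L'.
  split => [x c h|x]; rewrite mxE; case: eqP => _.
  - by rewrite -val_eqE ltn_eqF.
  - exact: L1.
  - by rewrite eqxx.
  - exact: L2.
have L'i : forall x c : 'I_m, (c < i.+1)%N -> L' x c = (x == c)%:R.
  move=> x c hc; rewrite mxE; case: eqP => [-> // | nc]; apply: Li.
  rewrite ltnS leq_eqVlt in hc; case/orP: hc => // /eqP h.
  by exfalso; apply: nc; apply/val_inj.
have L'P : forall x y, P a0 y = 0 -> (L' *m P) x y = (L *m P) x y.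
  move=> x y hy; rewrite !mxE; apply: eq_bigr => c _; rewrite mxE.
  by case: eqP => [->|]; rewrite ?hy ?mulr0.
have [rowEq [R' [R'l E']]] : (forall b, P a0 b = P' a0 b) /\
   exists R', lowU R' /\ L' *m P = P' *m R'.
  case: (pickP (fun b0 => P' a0 b0 != 0)) => [b0 hb0 | hz].
  - have h1 := F2_nz hb0.
    have Pb : forall b, P a0 b = R b0 b.
      move=> b; rewrite -rowE E mxE (bigD1 b0) //= h1 mul1r big1 ?addr0 //.
      move=> c nc; case: (F2_cases (P' a0 c)) => hc; first by rewrite hc mul0r.
      by exfalso; move/eqP: nc; apply; apply: (Q1 _ _ _ _ hb0); rewrite hc oner_neq0.
    have Pa0b0 : P a0 b0 != 0 by rewrite Pb R2 oner_neq0.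
    have rowEq : forall b, P a0 b = P' a0 b.
      move=> b; case: (eqVneq b b0) => [->|nb]; first by rewrite Pb R2 h1.
      case: (F2_cases (P a0 b)) => hp; case: (F2_cases (P' a0 b)) => hq;
        rewrite ?hp ?hq //.
      1,2: exfalso; move/eqP: nb; apply.
      1,2: first [by apply: (Q1 _ _ _ _ hb0); rewrite hq oner_neq0
                 |by apply: (P1 _ _ _ _ Pa0b0); rewrite hp oner_neq0].
    have Pc : forall c, P c b0 = (c == a0)%:R.
      move=> c; case: (eqVneq c a0) => [->|nc]; first exact: F2_nz.
      case: (F2_cases (P c b0)) => hc //.
      by exfalso; move/eqP: nc; apply; apply: (P2 _ _ _ _ Pa0b0); rewrite hc oner_neq0.
    have P'c : forall c, P' c b0 = (c == a0)%:R.
      move=> c; case: (eqVneq c a0) => [->|nc]; first exact: F2_nz.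
      case: (F2_cases (P' c b0)) => hc //.
      by exfalso; move/eqP: nc; apply; apply: (Q2 _ _ _ _ hb0); rewrite hc oner_neq0.
    split => //.
    exists (\matrix_(c, y) if y == b0 then (c == y)%:R else R c y); split.
      split => [x c h|x]; rewrite mxE; case: eqP => _.
      * by rewrite -val_eqE ltn_eqF.
      * exact: R1.
      * by rewrite eqxx.
      * exact: R2.
    apply/matrixP => x y; case: (eqVneq y b0) => [->|ny].
      rewrite !mxE (bigD1 a0) //= big1 ?addr0; last first.
        by move=> c nc; rewrite Pc (negbTE nc) mulr0.
      rewrite (bigD1 b0) //= big1 ?addr0; last first.
        by move=> c nc; rewrite mxE eqxx (negbTE nc) mulr0.
      by rewrite !mxE !eqxx Pc P'c !eqxx !mulr1.
    have hy : P a0 y = 0.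
      case: (F2_cases (P a0 y)) => hp //.
      by exfalso; move/eqP: ny; apply; apply: (P1 _ _ _ _ Pa0b0); rewrite hp oner_neq0.
    rewrite L'P // E !mxE; apply: eq_bigr => c _; rewrite mxE (negbTE ny) //.
  - have hz' : forall b, P' a0 b = 0 by move=> b; apply: F2_z; rewrite hz.
    have hp : forall b, P a0 b = 0.
      move=> b; rewrite -rowE E mxE big1 // => c _; by rewrite hz' mul0r.
    split; first by move=> b; rewrite hp hz'.
    exists R; split; first by split.
    by apply/matrixP => x y; rewrite L'P ?hp // E.
case: (eqVneq a a0) => [ea|na]; first by move=> b; rewrite ea; apply: rowEq.
apply: (IH i.+1 L' R') => //.
- by rewrite addSnnS.
- rewrite leq_eqVlt in ia; case/orP: ia => // /eqP h.
  by exfalso; move/eqP: na; apply; apply/val_inj.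
Qed.

Lemma incr_inj r m (f : 'I_r -> 'I_m) : increasing f -> injective f.
Proof.
move=> hf i j e; apply/val_inj; case: (ltngtP i j) => // h.
  by move: (hf _ _ h); rewrite e ltnn.
by move: (hf _ _ h); rewrite e ltnn.
Qed.

Theorem lemma4 (m n r r' : nat)
  (alpha : 'I_r -> 'I_m) (alpha' : 'I_r' -> 'I_m)
  (beta : 'I_r -> 'I_n) (beta' : 'I_r' -> 'I_n) :
  increasing alpha -> increasing alpha' ->
  injective beta -> injective beta' ->
  (exists (L : 'M[F2]_m) (R : 'M[F2]_n),
     lower_unitri L /\ lower_unitri R /\
     L *m Pi alpha beta = Pi alpha' beta' *m R) ->
  Pi alpha beta = Pi alpha' beta'.
Proof.
move=> ia ia' ib ib' [L [R [hL [hR E]]]].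
apply/matrixP => a b.
have Li : forall a c : 'I_m, (c < 0)%N -> L a c = (a == c)%:R by [].
exact: (key (Pi_pp (incr_inj ia) ib) (Pi_pp (incr_inj ia') ib') (erefl (0 + m)%N)
  (lower_unitri_lowU hL) (lower_unitri_lowU hR) Li E (leq0n a) b).
Qed.
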